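(* For $2\le n\le l\le\infty$, the quotient morphism of dg algebras $\Phi_{l,n}\colon\mathcal C_l\to\mathcal C_n$ is a quasi-isomorphism, i.e. it induces an isomorphism on cohomology with respect to $\delta_0$ in every bidegree.
   Context: $R$ is a commutative unital ring. $\mathcal C_\infty=R\langle d_1,d_2,\dots\rangle$ is the free bigraded associative unital $R$-algebra on generators $d_i$ ($i\ge1$) of bidegree $(-i,1-i)$. For $k\ge1$ let $S_k=\sum_{i+j=k,\ i,j\ge1}(-1)^{i+1}d_id_j$ (so $S_1=0$). $\delta_0$ is the unique derivation of bidegree $(0,1)$ with $\delta_0(d_i)=S_i$ for all $i\ge1$, satisfying the graded Leibniz rule $\delta_0(xy)=\delta_0(x)y+(-1)^{x_2}x\delta_0(y)$ for $x$ of bidegree $(x_1,x_2)$; it satisfies $\delta_0^2=0$. For $n\ge1$, $I_n$ is the two-sided ideal generated by $S_k$ and $d_k$ for all $k\ge n$ (it is $\delta_0$-stable), $I_\infty=0$, and $\mathcal C_n=(\mathcal C_\infty/I_n,\delta_0)$. For $1\le n\le l\le\infty$, $I_l\subseteq I_n$ and $\Phi_{l,n}\colon\mathcal C_l\to\mathcal C_n$ is the induced surjection. *)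

(* Defs.v *)
From mathcomp Require Import all_boot all_order all_algebra.
Set Implicit Arguments. Unset Strict Implicit. Unset Printing Implicit Defensive.
Import GRing.Theory.
Local Open Scope ring_scope.

(* The free associative unital R-algebra C_oo = R<d_1, d_2, ...>.           *)
(* A word in the generators is a [seq nat]; the letter [a : nat] stands for *)
(* the generator d_(a+1)  (so every letter is a generator d_i with i >= 1). *)
(* An element of C_oo is represented by a finite formal list of terms       *)
(* (coefficient, word); two representatives denote the same element iff    *)
(* they have the same coefficient function [coef].                          *)

Section FreeAlg.
Variable R : comPzRingType.

Definition ncpoly := seq (R * seq nat).

Definition coef (x : ncpoly) (w : seq nat) : R :=
  \sum_(t <- x | t.2 == w) t.1.

Definition nceq (x y : ncpoly) : Prop := forall w, coef x w = coef y w.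

Definition nczero : ncpoly := [::].
Definition ncadd (x y : ncpoly) : ncpoly := x ++ y.
Definition ncopp (x : ncpoly) : ncpoly := [seq (- t.1, t.2) | t <- x].
Definition ncsub (x y : ncpoly) : ncpoly := ncadd x (ncopp y).
Definition ncmul (x y : ncpoly) : ncpoly :=
  [seq (t.1 * s.1, t.2 ++ s.2) | t <- x, s <- y].
Definition ncsum (xs : seq ncpoly) : ncpoly := flatten xs.

Definition dgen (i : nat) : ncpoly := [:: (1, [:: i.-1])].

(* S_k = sum_{i+j=k, i,j>=1} (-1)^(i+1) d_i d_j   (so S_1 = 0) *)
Definition Sgen (k : nat) : ncpoly :=
  [seq ((-1) ^+ i.+1, [:: i.-1; (k - i).-1]) | i <- iota 1 k.-1].

(* Bidegree: d_i has bidegree (-i, 1-i); for a word this is additive. *)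
Definition bideg (w : seq nat) : int * int :=
  (- (Posz (sumn w + size w)), - (Posz (sumn w))).

Definition homog (p q : int) (x : ncpoly) : Prop :=
  forall w, coef x w != 0 -> bideg w = (p, q).

(* delta_0 on a word d_{i_1} ... d_{i_m}: by the graded Leibniz rule,
   sum_k (-1)^(x_2 of d_{i_1}...d_{i_(k-1)}) d_{i_1}..d_{i_(k-1)} S_{i_k} d_{i_(k+1)}..d_{i_m}.
   The second degree of the prefix take k w is -(sumn (take k w)). *)
Definition delta0_word (w : seq nat) : ncpoly :=
  flatten [seq [seq ((-1) ^+ (sumn (take k w)) * t.1,
                     take k w ++ t.2 ++ drop k.+1 w)
               | t <- Sgen (nth 0 w k).+1]
          | k <- iota 0 (size w)].

(* delta_0 : the R-linear extension (the unique derivation with d_i |-> S_i) *)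
Definition delta0 (x : ncpoly) : ncpoly :=
  flatten [seq [seq (t.1 * s.1, s.2) | s <- delta0_word t.2] | t <- x].

(* Levels n in {1, 2, ..., oo}: [Some n] is n, [None] is oo. *)
Definition level := option nat.

Definition level_le (n l : level) : bool :=
  match n, l with
  | _, None => true
  | None, Some _ => false
  | Some a, Some b => (a <= b)%N
  end.

Definition geq_level (k : nat) (n : level) : bool :=
  if n is Some m then (m <= k)%N else false.

(* Membership in the two-sided ideal I_n generated by S_k and d_k, k >= n:
   x is a finite sum of terms u * g * v with g = S_k or g = d_k, k >= n.
   For n = oo there are no generators, so I_oo = 0. *)
Definition inI (n : level) (x : ncpoly) : Prop :=
  exists gs : seq (ncpoly * (bool * nat) * ncpoly),
    all (fun g => geq_level g.1.2.2 n) gs /\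
    nceq x (ncsum [seq ncmul (ncmul g.1.1 (if g.1.2.1 then Sgen g.1.2.2
                                           else dgen g.1.2.2)) g.2 | g <- gs]).

(* C_n = (C_oo / I_n, delta_0).  An element of C_n in bidegree (p,q) is
   represented by a homogeneous x in C_oo of that bidegree.
   Cocycles and coboundaries of C_n, read on representatives: *)
Definition cocycle (n : level) (p q : int) (x : ncpoly) : Prop :=
  homog p q x /\ inI n (delta0 x).

Definition coboundary (n : level) (p q : int) (x : ncpoly) : Prop :=
  homog p q x /\ exists y, homog p (q - 1) y /\ inI n (ncsub x (delta0 y)).

(* Phi_{l,n} : C_l -> C_n (induced by identity of C_oo) induces a bijection
   H^{p,q}(C_l) -> H^{p,q}(C_n), [x] |-> [x]. *)
Definition Phi_cohomology_bijective (l n : level) (p q : int) : Prop :=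
  (forall b, cocycle n p q b ->
     exists a, cocycle l p q a /\ coboundary n p q (ncsub a b)) /\
  (forall a, cocycle l p q a -> coboundary n p q a -> coboundary l p q a).

End FreeAlg.

(* Main.v *)
Require Import Defs.
From mathcomp Require Import all_boot all_order all_algebra.
From mathcomp Require Import ring.
Set Implicit Arguments. Unset Strict Implicit. Unset Printing Implicit Defensive.
Import GRing.Theory.
Local Open Scope ring_scope.

Definition lsum {R : comPzRingType} (F : seq nat -> R) (x : ncpoly R) : R :=
  \sum_(t <- x) t.1 * F t.2.

Definition lin_ext {R : comPzRingType} (f : seq nat -> ncpoly R) (x : ncpoly R) : ncpoly R :=
  flatten [seq [seq (t.1 * s.1, s.2) | s <- f t.2] | t <- x].

Definition ind {R : comPzRingType} (w u : seq nat) : R := (u == w)%:R.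

Lemma coefE {R : comPzRingType} (x : ncpoly R) w : coef x w = lsum (ind w) x.
Proof.
rewrite /coef /lsum big_mkcond /=; apply: eq_bigr => t _.
by rewrite /ind; case: (t.2 == w); rewrite ?mulr1 ?mulr0.
Qed.

Lemma lsum_nil {R : comPzRingType} (F : seq nat -> R) : lsum F [::] = 0.
Proof. by rewrite /lsum big_nil. Qed.

Lemma lsum_cons {R : comPzRingType} (F : seq nat -> R) t x :
  lsum F (t :: x) = t.1 * F t.2 + lsum F x.
Proof. by rewrite /lsum big_cons. Qed.

Lemma lsum_cat {R : comPzRingType} (F : seq nat -> R) x y :
  lsum F (x ++ y) = lsum F x + lsum F y.
Proof. by rewrite /lsum big_cat. Qed.

Lemma lsum_flatten {R : comPzRingType} (F : seq nat -> R) L :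
  lsum F (flatten L) = \sum_(x <- L) lsum F x.
Proof. by rewrite /lsum big_flatten. Qed.

Lemma lsum_opp {R : comPzRingType} (F : seq nat -> R) x :
  lsum F (ncopp x) = - lsum F x.
Proof. by rewrite /lsum /ncopp big_map -sumrN; apply: eq_bigr => t _; rewrite mulNr. Qed.

Lemma lsum_lin_ext {R : comPzRingType} (F : seq nat -> R) f x :
  lsum F (lin_ext f x) = lsum (fun u => lsum F (f u)) x.
Proof.
rewrite /lin_ext lsum_flatten /lsum big_map; apply: eq_bigr => t _.
rewrite big_map mulr_sumr; apply: eq_bigr => s _; by rewrite mulrA.
Qed.

Lemma lsum_ncmul {R : comPzRingType} (F : seq nat -> R) x y :
  lsum F (ncmul x y) = \sum_(t <- x) \sum_(s <- y) t.1 * s.1 * F (t.2 ++ s.2).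
Proof. by rewrite /lsum /ncmul big_allpairs_dep. Qed.

Lemma lsumB {R : comPzRingType} (F G : seq nat -> R) x :
  lsum F x - lsum G x = lsum (fun u => F u - G u) x.
Proof. by rewrite /lsum -sumrB; apply: eq_bigr => t _; rewrite mulrBr. Qed.

Lemma lsumD {R : comPzRingType} (F G : seq nat -> R) x :
  lsum F x + lsum G x = lsum (fun u => F u + G u) x.
Proof. by rewrite /lsum -big_split; apply: eq_bigr => t _; rewrite mulrDr. Qed.

Lemma eq_lsum {R : comPzRingType} (F G : seq nat -> R) x :
  (forall u, F u = G u) -> lsum F x = lsum G x.
Proof. by move=> H; rewrite /lsum; apply: eq_bigr => t _; rewrite H. Qed.

Lemma lsum0 {R : comPzRingType} (F : seq nat -> R) x :
  (forall u, F u = 0) -> lsum F x = 0.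
Proof. by move=> H; rewrite /lsum big1 // => t _; rewrite H mulr0. Qed.

Lemma lsum_supp {R : comPzRingType} (F : seq nat -> R) (x : ncpoly R) (s : seq (seq nat)) :
  uniq s -> {subset map snd x <= s} ->
  lsum F x = \sum_(u <- s) coef x u * F u.
Proof.
move=> us; elim: x => [|t x IH] sub.
  by rewrite lsum_nil big1 // => u _; rewrite coefE lsum_nil mul0r.
rewrite lsum_cons IH; last by move=> u hu; apply: sub; rewrite /= inE hu orbT.
have ts : t.2 \in s by apply: sub; rewrite /= inE eqxx.
have E u : coef (t :: x) u * F u = t.1 * (ind u t.2 * F u) + coef x u * F u.
  by rewrite !coefE lsum_cons mulrDl mulrA.
rewrite (eq_bigr _ (fun u _ => E u)) big_split /= -mulr_sumr; congr (_ + _).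
rewrite (bigD1_seq t.2) //= /ind eqxx mul1r big1 ?addr0 // => u /negbTE hu.
by rewrite eq_sym hu mul0r.
Qed.

Lemma lsum_eq {R : comPzRingType} (F : seq nat -> R) x y :
  nceq x y -> lsum F x = lsum F y.
Proof.
move=> H; pose s := undup (map snd x ++ map snd y).
have us : uniq s by rewrite undup_uniq.
rewrite (@lsum_supp _ F x s us); last by move=> u hu; rewrite mem_undup mem_cat hu.
rewrite (@lsum_supp _ F y s us); last by move=> u hu; rewrite mem_undup mem_cat hu orbT.
by apply: eq_bigr => u _; rewrite H.
Qed.

Lemma nceq_refl {R : comPzRingType} (x : ncpoly R) : nceq x x.
Proof. by []. Qed.
Lemma nceq_sym {R : comPzRingType} (x y : ncpoly R) : nceq x y -> nceq y x.
Proof. by move=> H w; rewrite H. Qed.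
Lemma nceq_trans {R : comPzRingType} (x y z : ncpoly R) : nceq x y -> nceq y z -> nceq x z.
Proof. by move=> H1 H2 w; rewrite H1 H2. Qed.

Lemma lsum_ncmulA {R : comPzRingType} (F : seq nat -> R) x y :
  lsum F (ncmul x y) = lsum (fun u => lsum (fun v => F (u ++ v)) y) x.
Proof.
rewrite lsum_ncmul /lsum; apply: eq_bigr => t _; rewrite mulr_sumr.
by apply: eq_bigr => s _; rewrite mulrA.
Qed.

Lemma lsum_ncsum {R : comPzRingType} (F : seq nat -> R) (A : Type) (f : A -> ncpoly R) gs :
  lsum F (ncsum [seq f g | g <- gs]) = \sum_(g <- gs) lsum F (f g).
Proof. by rewrite /ncsum lsum_flatten big_map. Qed.

Lemma nceqP {R : comPzRingType} (x y : ncpoly R) :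
  (forall w, lsum (ind w) x = lsum (ind w) y) -> nceq x y.
Proof. by move=> H w; rewrite !coefE. Qed.

Definition genp {R : comPzRingType} (g : ncpoly R * (bool * nat) * ncpoly R) : ncpoly R :=
  ncmul (ncmul g.1.1 (if g.1.2.1 then Sgen R g.1.2.2 else dgen R g.1.2.2)) g.2.

Lemma inIE {R : comPzRingType} n (x : ncpoly R) :
  inI n x <-> exists gs, all (fun g => geq_level g.1.2.2 n) gs /\ nceq x (ncsum [seq genp g | g <- gs]).
Proof. by []. Qed.

Lemma inI_eq {R : comPzRingType} n (x y : ncpoly R) : inI n x -> nceq x y -> inI n y.
Proof.
move=> [gs [H1 H2]] H; exists gs; split=> //.
exact: nceq_trans (nceq_sym H) H2.
Qed.

Lemma inI_nil {R : comPzRingType} n : inI n ([::] : ncpoly R).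
Proof. by exists [::]. Qed.

Lemma inI_cat {R : comPzRingType} n (x y : ncpoly R) : inI n x -> inI n y -> inI n (x ++ y).
Proof.
move=> /inIE [g1 [A1 E1]] /inIE [g2 [A2 E2]]; apply/inIE; exists (g1 ++ g2).
split; first by rewrite all_cat A1 A2.
by move=> w; rewrite /ncsum map_cat flatten_cat !coefE !lsum_cat -!coefE E1 E2.
Qed.

Lemma inI_flatten {R : comPzRingType} n (L : seq (ncpoly R)) :
  (forall z, z \in L -> inI n z) -> inI n (flatten L).
Proof.
elim: L => [|z L IH] H /=; first exact: inI_nil.
apply: inI_cat; first by apply: H; rewrite inE eqxx.
by apply: IH => z' hz; apply: H; rewrite inE hz orbT.
Qed.

Lemma inI_opp {R : comPzRingType} n (x : ncpoly R) : inI n x -> inI n (ncopp x).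
Proof.
move=> /inIE [gs [A E]]; apply/inIE.
exists [seq (ncopp g.1.1, g.1.2, g.2) | g <- gs]; split.
  by rewrite all_map; apply: sub_all A => g.
apply: nceqP => w; rewrite lsum_opp -coefE E coefE !lsum_ncsum big_map -sumrN.
apply: eq_bigr => g _; rewrite /genp /= !lsum_ncmulA lsum_opp.
by [].
Qed.

Lemma inI_gen {R : comPzRingType} n (b : bool) k (c : R) u r :
  geq_level k n ->
  inI n (ncmul (ncmul [:: (c, u)] (if b then Sgen R k else dgen R k)) [:: (1, r)]).
Proof.
move=> H; apply/inIE; exists [:: ([:: (c, u)], (b, k), [:: (1, r)])]; split.
  by rewrite /= H.
by move=> w; rewrite /ncsum /= cats0.
Qed.

Definition good (n : level) := level_le (Some 2%N) n.

Lemma good_geq n k : good n -> geq_level k n -> (2 <= k)%N.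
Proof. by case: n => //= m h1 h2; apply: leq_trans h1 h2. Qed.

Lemma geq_levelS n k : geq_level k n -> geq_level k.+1 n.
Proof. by case: n => //= m h; apply: leq_trans h _. Qed.

Lemma good_le n l : good n -> level_le n l -> good l.
Proof. by case: n => [m|]; case: l => [k|] //= h1 h2; apply: leq_trans h1 h2. Qed.

Definition h_word {R : comPzRingType} (w : seq nat) : ncpoly R :=
  match w with 0%N :: b :: r => [:: (1, b.+1 :: r)] | _ => [::] end.

Definition pi_word {R : comPzRingType} (w : seq nat) : ncpoly R :=
  match w with [::] => [:: (1, [::])] | [:: 0%N] => [:: (1, [:: 0%N])] | _ => [::] end.

Definition hop {R : comPzRingType} (x : ncpoly R) := lin_ext h_word x.
Definition piop {R : comPzRingType} (x : ncpoly R) := lin_ext pi_word x.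

Lemma delta0E {R : comPzRingType} (x : ncpoly R) : delta0 x = lin_ext (delta0_word R) x.
Proof. by []. Qed.

Lemma dw_cons {R : comPzRingType} a r :
  delta0_word R (a :: r) =
  [seq (t.1, t.2 ++ r) | t <- Sgen R a.+1] ++
  [seq ((-1) ^+ a * t.1, a :: t.2) | t <- delta0_word R r].
Proof.
rewrite /delta0_word /= (iotaDl 1 0) -map_comp /= drop0; congr (_ ++ _).
  by apply: eq_map => t; rewrite expr0 mul1r.
rewrite map_flatten -map_comp; congr flatten; apply: eq_map => k /=.
rewrite -map_comp; apply: eq_map => t /=.
by rewrite exprD mulrA.
Qed.

Lemma dw_nil {R : comPzRingType} : delta0_word R [::] = [::].
Proof. by []. Qed.

Lemma lsum_dw_cons {R : comPzRingType} (F : seq nat -> R) a r :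
  lsum F (delta0_word R (a :: r)) =
  lsum (fun v => F (v ++ r)) (Sgen R a.+1) + (-1) ^+ a * lsum (fun v => F (a :: v)) (delta0_word R r).
Proof.
rewrite dw_cons lsum_cat /lsum !big_map /=; congr (_ + _).
by rewrite mulr_sumr; apply: eq_bigr => t _; rewrite mulrA.
Qed.

Lemma lsum_Sgen {R : comPzRingType} (F : seq nat -> R) k :
  lsum F (Sgen R k) = \sum_(i <- iota 1 k.-1) (-1) ^+ i.+1 * F [:: i.-1; (k - i).-1].
Proof. by rewrite /lsum /Sgen big_map. Qed.

Definition Hc {R : comPzRingType} w v : R := lsum (ind w) (h_word v).

Lemma Hc0 {R : comPzRingType} w b x : Hc w (0%N :: b :: x) = ind w (b.+1 :: x) :> R.
Proof. by rewrite /Hc /= lsum_cons lsum_nil mul1r addr0. Qed.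

Lemma HcS {R : comPzRingType} w a x : Hc w (a.+1 :: x) = 0 :> R.
Proof. by rewrite /Hc /= lsum_nil. Qed.

Lemma homotopy_word {R : comPzRingType} u w :
  lsum (fun v => lsum (ind w) (delta0_word R v)) (h_word u) +
  lsum (Hc w) (delta0_word R u) = ind w u - lsum (ind w) (pi_word u) :> R.
Proof.
case: u => [|[|a] r].
- rewrite /= !lsum_nil lsum_cons lsum_nil /=; ring.
- case: r => [|b r].
    rewrite /= lsum_nil lsum_dw_cons /= !lsum_nil lsum_cons lsum_nil /=; ring.
  rewrite /= lsum_nil subr0 lsum_cons lsum_nil /= addr0 mul1r.
rewrite (lsum_dw_cons (ind w) b.+1 r) (lsum_dw_cons (Hc w) 0 (b :: r)).
  rewrite (_ : Sgen R 1 = [::]) // lsum_nil add0r expr0 mul1r.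
  rewrite lsum_dw_cons.
  have ED : lsum (fun v => Hc w [:: 0%N, b & v]) (delta0_word R r) =
            lsum (fun v => ind w (b.+1 :: v)) (delta0_word R r).
    by apply: eq_lsum => v; rewrite Hc0.
  have EA : lsum (fun v => ind w (v ++ r)) (Sgen R b.+2) = ind w [:: 0%N, b & r] +
      \sum_(j <- iota 1 b) (-1) ^+ j.+2 * ind w [:: j, (b.+1 - j).-1 & r] :> R.
    rewrite lsum_Sgen /= big_cons /= (iotaDl 1 1) big_map expr2 mulN1r opprK mul1r; congr (_ + _).
  have EB : lsum (fun v => Hc w (0%N :: v ++ r)) (Sgen R b.+1) =
      \sum_(j <- iota 1 b) (-1) ^+ j.+1 * ind w [:: j, (b.+1 - j).-1 & r] :> R.
    rewrite lsum_Sgen /= big_seq [RHS]big_seq; apply: eq_bigr => j.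
    rewrite mem_iota => /andP [hj _]; rewrite Hc0 prednK //.
  rewrite ED EA EB.
  set D := lsum _ _.
  have -> : \sum_(j <- iota 1 b) (-1) ^+ j.+2 * ind w [:: j, (b.+1 - j).-1 & r] =
            - \sum_(j <- iota 1 b) (-1) ^+ j.+1 * ind w [:: j, (b.+1 - j).-1 & r] :> R.
    by rewrite -sumrN; apply: eq_bigr => j _; rewrite exprS mulN1r mulNr.
  rewrite exprS; ring.
- rewrite /= !lsum_nil add0r subr0 lsum_dw_cons.
  rewrite (@lsum0 _ (fun v => Hc w (a.+1 :: v))); last by move=> v; rewrite HcS.
  rewrite mulr0 addr0 lsum_Sgen /= big_cons /= (iotaDl 2 0) big_map big1; last first.
    by move=> j _; rewrite HcS mulr0.
  by rewrite addr0 /= Hc0 expr2 mulN1r opprK mul1r.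
Qed.

Lemma coef_hop {R : comPzRingType} (x : ncpoly R) w : lsum (ind w) (hop x) = lsum (Hc w) x.
Proof. by rewrite /hop lsum_lin_ext. Qed.

Lemma homotopy {R : comPzRingType} (x : ncpoly R) w :
  coef x w - coef (piop x) w = coef (delta0 (hop x)) w + coef (hop (delta0 x)) w.
Proof.
rewrite !coefE coef_hop delta0E /hop /piop !lsum_lin_ext lsumB lsumD.
by apply: eq_lsum => u; rewrite homotopy_word.
Qed.

Lemma h_eq {R : comPzRingType} (x y : ncpoly R) : nceq x y -> nceq (hop x) (hop y).
Proof. by move=> H; apply: nceqP => w; rewrite !coef_hop; apply: lsum_eq. Qed.

Lemma lsumZ {R : comPzRingType} (F : seq nat -> R) c x :
  lsum (fun v => c * F v) x = c * lsum F x.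
Proof. by rewrite /lsum mulr_sumr; apply: eq_bigr => t _; rewrite mulrCA. Qed.

Lemma Emono {R : comPzRingType} (F : seq nat -> R) c tw G c' r :
  lsum F (ncmul (ncmul [:: (c, tw)] G) [:: (c', r)]) =
  c * c' * lsum (fun v => F (tw ++ v ++ r)) G.
Proof.
rewrite lsum_ncmulA (@eq_lsum _ _ (fun a => c' * F (a ++ r))); last first.
  by move=> a; rewrite lsum_cons lsum_nil addr0.
rewrite lsumZ lsum_ncmulA lsum_cons lsum_nil addr0 /=.
rewrite (@eq_lsum _ _ (fun v => F (tw ++ v ++ r))); last by move=> v; rewrite catA.
by rewrite mulrCA mulrA.
Qed.

Lemma big_iota1S {R : comPzRingType} (F : nat -> R) m :
  \sum_(i <- iota 1 m.+1) F i = F 1%N + \sum_(j <- iota 1 m) F j.+1.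
Proof. by rewrite /= big_cons (iotaDl 1 1) big_map. Qed.

Lemma hop_mono {R : comPzRingType} n (b : bool) k (c c' : R) tw r :
  good n -> geq_level k n ->
  inI n (hop (ncmul (ncmul [:: (c, tw)] (if b then Sgen R k else dgen R k)) [:: (c', r)])).
Proof.
move=> Hn Hk; have k2 := good_geq Hn Hk.
set G := (if b then _ else _).
case: tw => [|[|a] x].
- case: b @G => G.
  +
    apply: (@inI_eq _ n (ncmul (ncmul [:: (c * c', [::])] (dgen R k)) [:: (1, r)])).
      exact: (@inI_gen _ n false).
    apply: nceqP => w; rewrite coef_hop !Emono mulr1 /G lsum_Sgen; congr (_ * _).
    case: k Hk k2 {G} => [|[|k]] //= Hk _.
    rewrite lsum_cons lsum_nil /= mul1r addr0 big_cons /= (iotaDl 2 0) big_map big1; last first.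
      by move=> j _; rewrite HcS mulr0.
    by rewrite addr0 /= Hc0 expr2 mulN1r opprK mul1r.
  + apply: (@inI_eq _ n [::]); first exact: inI_nil.
    apply: nceqP => w; rewrite coef_hop Emono /G.
    case: k Hk k2 {G} => [|[|k]] //= Hk _.
    rewrite lsum_cons !lsum_nil /= HcS; ring.
- case: x => [|b' x].
  + case: b @G => G.
    * apply: (@inI_eq _ n (ncmul (ncmul [:: (- (c * c'), [::])] (Sgen R k.+1)) [:: (1, r)] ++
                            ncmul (ncmul [:: (c * c', [:: 0%N])] (dgen R k)) [:: (1, r)])).
        apply: inI_cat; first exact: (@inI_gen _ n true _ _ _ _ (geq_levelS Hk)).
        exact: (@inI_gen _ n false).
      apply: nceqP => w; rewrite coef_hop lsum_cat !Emono /G !lsum_Sgen.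
      case: k Hk k2 {G} => [|[|k]] // Hk _.
      rewrite lsum_cons lsum_nil (big_iota1S _ k.+1) -[k.+2.-1]/k.+1.
      have -> : \sum_(i <- iota 1 k.+1) (-1) ^+ i.+1 * Hc w ([:: 0%N] ++ [:: i.-1; (k.+2 - i).-1] ++ r)
          = - \sum_(j <- iota 1 k.+1) (-1) ^+ j.+2 * ind w ([::] ++ [:: j.+1.-1; (k.+3 - j.+1).-1] ++ r) :> R.
        rewrite -sumrN big_seq [RHS]big_seq; apply: eq_bigr => j; rewrite mem_iota => /andP [hj _] /=.
        rewrite Hc0 prednK // (_ : (k.+3 - j.+1 = k.+2 - j)%N) // !exprS; ring.
      set S := \sum_(j <- _) _.
      rewrite /=; ring.
    * apply: (@inI_eq _ n (ncmul (ncmul [:: (c * c', [::])] (dgen R k.+1)) [:: (1, r)])).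
        exact: (@inI_gen _ n false _ _ _ _ (geq_levelS Hk)).
      apply: nceqP => w; rewrite coef_hop !Emono mulr1 /G /=; congr (_ * _).
      by rewrite !lsum_cons !lsum_nil /= Hc0 prednK // (ltnW k2).
  + apply: (@inI_eq _ n (ncmul (ncmul [:: (c * c', b'.+1 :: x)] G) [:: (1, r)])).
      exact: inI_gen.
    apply: nceqP => w; rewrite coef_hop !Emono mulr1; congr (_ * _).
    by apply: eq_lsum => v; rewrite /= Hc0.
- apply: (@inI_eq _ n [::]); first exact: inI_nil.
  apply: nceqP => w; rewrite coef_hop Emono lsum_nil lsum0 ?mulr0 // => v.
  by rewrite /= HcS.
Qed.

Lemma Emono' {R : comPzRingType} (F : seq nat -> R) (t : R * seq nat) G s :
  lsum F (ncmul (ncmul [:: t] G) [:: s]) =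
  t.1 * s.1 * lsum (fun v => F (t.2 ++ v ++ s.2)) G.
Proof. by case: t => c tw; case: s => c' r; rewrite Emono. Qed.

Lemma hop_gen {R : comPzRingType} n (g : ncpoly R * (bool * nat) * ncpoly R) :
  good n -> geq_level g.1.2.2 n -> inI n (hop (genp g)).
Proof.
case: g => [[u [b k]] v] /= Hn Hk; rewrite /genp /=.
set G := (if b then _ else _).
apply: (@inI_eq _ n (flatten [seq hop (ncmul (ncmul [:: t] G) [:: s]) | t <- u, s <- v])).
  apply: inI_flatten => z /allpairsP [[[c tw] [c' r]] [_ _ ->]] /=.
  exact: hop_mono.
apply: nceqP => w; rewrite lsum_flatten big_allpairs_dep coef_hop !lsum_ncmulA.
under eq_bigr => t _ do under eq_bigr => s _ do rewrite coef_hop Emono'.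
rewrite /lsum; apply: eq_bigr => t _.
rewrite [RHS]mulr_sumr.
under [RHS]eq_bigr => gg _ do rewrite mulr_sumr mulr_sumr.
rewrite [RHS]exchange_big /=; apply: eq_bigr => s _.
rewrite mulr_sumr; apply: eq_bigr => gg _.
rewrite catA; ring.
Qed.

Lemma hop_inI {R : comPzRingType} n (x : ncpoly R) : good n -> inI n x -> inI n (hop x).
Proof.
move=> Hn /inIE [gs [A E]].
apply: (@inI_eq _ n (flatten [seq hop (genp g) | g <- gs])).
  apply: inI_flatten => z /mapP [g hg ->]; apply: hop_gen => //.
  exact: (allP A).
apply: nceqP => w; rewrite lsum_flatten big_map coef_hop (lsum_eq _ E) /ncsum lsum_flatten big_map.
by apply: eq_bigr => g _; rewrite coef_hop.
Qed.

Lemma coef_sub {R : comPzRingType} (x y : ncpoly R) w : coef (ncsub x y) w = coef x w - coef y w.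
Proof. by rewrite !coefE /ncsub /ncadd lsum_cat lsum_opp. Qed.

Lemma coef_opp {R : comPzRingType} (x : ncpoly R) w : coef (ncopp x) w = - coef x w.
Proof. by rewrite !coefE lsum_opp. Qed.

Lemma coef_delta0_opp {R : comPzRingType} (x : ncpoly R) w : coef (delta0 (ncopp x)) w = - coef (delta0 x) w.
Proof. by rewrite !coefE delta0E !lsum_lin_ext lsum_opp. Qed.

Lemma K {R : comPzRingType} n (x : ncpoly R) : good n -> inI n (delta0 x) ->
  inI n (ncsub (ncsub x (piop x)) (delta0 (hop x))).
Proof.
move=> Hn Hd; apply: (inI_eq (hop_inI Hn Hd)) => w.
rewrite !coef_sub homotopy; ring.
Qed.

Definition short (w : seq nat) := (w == [::]) || (w == [:: 0%N]).

Lemma pi_word_coef {R : comPzRingType} u w :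
  lsum (ind w) (pi_word u) = if short w then ind w u else 0 :> R.
Proof.
by case: u => [|[|a] [|b r]]; case: w => [|[|a'] [|b' r']];
  rewrite /= ?lsum_cons ?lsum_nil /= /ind /= ?mul1r ?addr0.
Qed.

Lemma coef_piop {R : comPzRingType} (x : ncpoly R) w :
  coef (piop x) w = if short w then coef x w else 0.
Proof.
rewrite !coefE /piop lsum_lin_ext.
case: ifP => hw; first by apply: eq_lsum => u; rewrite pi_word_coef hw.
by apply: lsum0 => u; rewrite pi_word_coef hw.
Qed.

Lemma delta0_piop {R : comPzRingType} (x : ncpoly R) : nceq (delta0 (piop x)) [::].
Proof.
move=> w; rewrite !coefE lsum_nil delta0E /piop !lsum_lin_ext; apply: lsum0 => u.
by case: u => [|[|a] [|b r]]; rewrite /= ?lsum_cons ?lsum_nil /= ?mul1r ?addr0.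
Qed.

Lemma coef_hopE {R : comPzRingType} (x : ncpoly R) w :
  coef (hop x) w = match w with c.+1 :: r => coef x [:: 0%N, c & r] | _ => 0 end.
Proof.
rewrite !coefE coef_hop.
case: w => [|[|c] r].
- by apply: lsum0 => u; case: u => [|[|a] [|b r']]; rewrite /Hc /= ?lsum_cons ?lsum_nil /= /ind /= ?mul1r ?addr0.
- by apply: lsum0 => u; case: u => [|[|a] [|b r']]; rewrite /Hc /= ?lsum_cons ?lsum_nil /= /ind /= ?mul1r ?addr0.
- rewrite coefE; apply: eq_lsum => u; case: u => [|[|a] [|b r']]; rewrite /Hc /= ?lsum_cons ?lsum_nil /= /ind /= ?mul1r ?addr0 //.
Qed.

Lemma homog_sub {R : comPzRingType} p q (x y : ncpoly R) :
  homog p q x -> homog p q y -> homog p q (ncsub x y).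
Proof.
move=> Hx Hy w; rewrite coef_sub => H.
case: (eqVneq (coef x w) 0) => [hx|hx]; last exact: Hx.
by apply: Hy; move: H; rewrite hx sub0r oppr_eq0.
Qed.

Lemma homog_opp {R : comPzRingType} p q (x : ncpoly R) : homog p q x -> homog p q (ncopp x).
Proof. by move=> Hx w; rewrite coef_opp oppr_eq0; apply: Hx. Qed.

Lemma homog_piop {R : comPzRingType} p q (x : ncpoly R) : homog p q x -> homog p q (piop x).
Proof.
move=> Hx w; rewrite coef_piop; case: ifP => _; first exact: Hx.
by rewrite eqxx.
Qed.

Lemma homog_hop {R : comPzRingType} p q (x : ncpoly R) : homog p q x -> homog p (q - 1) (hop x).
Proof.
move=> Hx w; rewrite coef_hopE; case: w => [|[|c] r]; rewrite ?eqxx // => /Hx.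
rewrite /bideg /= => -[<- <-].
congr (_, _).
  by congr (- Posz _); rewrite !addSn !addnS add0n.
by rewrite add0n addSn -addn1 PoszD opprD.
Qed.

Lemma dw_size {R : comPzRingType} (F : seq nat -> R) u :
  (forall v, (2 <= size v)%N -> F v = 0) -> lsum F (delta0_word R u) = 0.
Proof.
elim: u F => [|a r IH] F HF; first by rewrite dw_nil lsum_nil.
rewrite lsum_dw_cons IH ?mulr0 ?addr0; last by move=> v hv; apply: HF => /=; apply: leqW.
rewrite lsum_Sgen big1 // => i _; rewrite HF ?mulr0 //= size_cat /=.
Qed.

Lemma ind_short {R : comPzRingType} w v : short w -> (2 <= size v)%N -> ind w v = 0 :> R.
Proof.
move=> /orP [] /eqP -> hv; rewrite /ind; case: eqP => // E;
  by move: hv; rewrite E.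
Qed.

Lemma coef_delta0_short {R : comPzRingType} (y : ncpoly R) w : short w -> coef (delta0 y) w = 0.
Proof.
move=> hw; rewrite coefE delta0E lsum_lin_ext; apply: lsum0 => u.
by apply: dw_size => v; apply: ind_short.
Qed.

Lemma inI_short {R : comPzRingType} n (z : ncpoly R) w : good n -> inI n z -> short w -> coef z w = 0.
Proof.
move=> Hn /inIE [gs [A E]] hw; rewrite E coefE lsum_ncsum big_seq big1 // => g hg.
have k2 := good_geq Hn (allP A g hg).
case: g hg k2 => [[u [b k]] v] /= _ k2; rewrite /genp /= !lsum_ncmulA.
apply: lsum0 => a; case: b.
  rewrite lsum_Sgen big1 // => i _; rewrite lsum0 ?mulr0 // => c.
  by apply: ind_short => //; rewrite !size_cat /= addnC !addnA addn2.
rewrite lsum_cons lsum_nil addr0 lsum0 ?mulr0 // => c.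
case: k k2 => [|[|k]] // _ /=.
move: hw => /orP [] /eqP ->; rewrite /ind;
  by case: a => [|x [|y a]]; case: c => [|y' c] => //=; rewrite eqseq_cons /= andbF.
Qed.

Theorem mainTheorem11 (R : comPzRingType) (n l : level) :
  level_le (Some 2%N) n -> level_le n l ->
  forall p q : int, Phi_cohomology_bijective R l n p q.
Proof.
move=> Hn Hnl p q; have Hl : good l := good_le Hn Hnl.
split.
- move=> b [Hb Hdb]; exists (piop b); split.
    split; first exact: homog_piop.
    exact: (inI_eq (inI_nil l) (nceq_sym (delta0_piop b))).
  split; first exact: homog_sub (homog_piop Hb) Hb.
  exists (ncopp (hop b)); split; first exact: homog_opp (homog_hop Hb).
  apply: (inI_eq (inI_opp (K Hn Hdb))) => w.
  rewrite coef_opp !coef_sub coef_delta0_opp; ring.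
- move=> a [Ha Hda] [_ [y [Hy Hiy]]]; split=> //.
  exists (hop a); split; first exact: homog_hop.
  apply: (inI_eq (K Hl Hda)) => w.
  rewrite !coef_sub coef_piop; case: ifP => hw; last by rewrite subr0.
  have h1 := inI_short Hn Hiy hw.
  rewrite coef_sub coef_delta0_short // subr0 in h1.
  by rewrite h1 subr0.
Qed.
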